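(* (a) For any ultrafilter $x\in I$ and any $n\in\mathbb{N}$, there exists an ultrafilter $y\in\overline{L_n}$ such that $y\,\tilde{\mid}\,x$. (b) For any $n\in\mathbb{N}$ and any ultrafilter $x\in L_n^*$, there exists an ultrafilter $y\in I$ such that $x\,\tilde{\mid}\,y$. (c) There exist ultrafilters $x\in I$ and $y\in I$ such that $y\,\tilde{\mid}\,x$.
   Context: $\mathbb{N}=\{1,2,3,\dots\}$; $\beta\mathbb{N}$ is the set of ultrafilters on $\mathbb{N}$ (Stone–Čech compactification, naturals identified with principal ultrafilters). For $A\subseteq\mathbb{N}$, $\overline{A}=\{x\in\beta\mathbb{N}:A\in x\}$ and $A^*=\overline{A}\setminus A$. $P$ is the set of primes, $L_0=\{1\}$, $L_n=\{a_1\cdots a_n:a_i\in P\}$. $I=\bigcap_{i=0}^\infty\overline{\mathbb{N}\setminus L_i}$ (ultrafilters containing none of the $L_i$). For $x,y\in\beta\mathbb{N}$, $x\,\tilde{\mid}\,y$ iff for every $A\in x$ the set $\{k\in\mathbb{N}:\exists a\in A,\ a\mid k\}$ belongs to $y$. *)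

(* Defs.v *)
From mathcomp Require Import all_boot.
Set Implicit Arguments. Unset Strict Implicit. Unset Printing Implicit Defensive.

(* Subsets of N = {1,2,3,...} are encoded as predicates on nat; the
   ambient set N itself is [Npos]. *)
Definition Npos : nat -> Prop := fun k => 0 < k.

Definition Ncompl (A : nat -> Prop) : nat -> Prop := fun k => 0 < k /\ ~ A k.

Definition is_ultrafilter (x : (nat -> Prop) -> Prop) : Prop :=
  [/\ x Npos,
      ~ x (fun _ => False),
      (forall A B : nat -> Prop, x A -> (forall k, A k -> B k) -> x B),
      (forall A B : nat -> Prop, x A -> x B -> x (fun k => A k /\ B k))
    & (forall A : nat -> Prop, x A \/ x (Ncompl A))].

Definition principal (x : (nat -> Prop) -> Prop) (n : nat) : Prop :=
  forall A : nat -> Prop, x A <-> A n.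

Definition in_closure (A : nat -> Prop) (x : (nat -> Prop) -> Prop) : Prop :=
  is_ultrafilter x /\ x A.

(* A^* = closure A \ A  (A seen as set of principal ultrafilters, A ⊆ N) *)
Definition in_star (A : nat -> Prop) (x : (nat -> Prop) -> Prop) : Prop :=
  in_closure A x /\ ~ (exists n, 0 < n /\ A n /\ principal x n).

Fixpoint L (n : nat) : nat -> Prop :=
  match n with
  | 0 => fun k => k = 1
  | n'.+1 => fun k => exists p a, prime p /\ L n' a /\ k = p * a
  end.

Definition in_I (x : (nat -> Prop) -> Prop) : Prop :=
  is_ultrafilter x /\ forall i : nat, x (Ncompl (L i)).

Definition div_up (A : nat -> Prop) : nat -> Prop :=
  fun k => 0 < k /\ exists a, A a /\ (a %| k).

Definition tdiv (x y : (nat -> Prop) -> Prop) : Prop :=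
  forall A : nat -> Prop, x A -> y (div_up A).

(* Main.v *)
Require Import Defs.
From mathcomp Require Import all_boot.
From Stdlib Require Import ClassicalEpsilon.
From mathcomp Require Import boolp classical_sets filter.
Set Implicit Arguments. Unset Strict Implicit.

Definition push (f : nat -> nat) (z : (nat -> Prop) -> Prop) : (nat -> Prop) -> Prop :=
  fun B => z (fun a => B (f a)).

Definition g (a : nat) : nat := a * 2 ^ a.

Lemma ultra_up z A B : is_ultrafilter z -> z A -> (forall k, A k -> B k) -> z B.
Proof. by case=> _ _ H _ _; apply: H. Qed.

Lemma ultra_I z A B : is_ultrafilter z -> z A -> z B -> z (fun k => A k /\ B k).
Proof. by case=> _ _ _ H _; apply: H. Qed.

Lemma push_ultra f z : is_ultrafilter z -> z (fun a => 0 < f a) ->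
  is_ultrafilter (push f z).
Proof.
move=> Hz Hp; have [Hn He Hu Hi Hc] := Hz; split => //.
- by move=> A B HA HAB; apply: Hu HA _ => k; apply: HAB.
- by move=> A B HA HB; apply: Hi.
- move=> A; case: (Hc (fun a => A (f a))) => H; [by left|right].
  apply: Hu (Hi _ _ H Hp) _ => k [[_ nA] p]; by split.
Qed.

Lemma L_pos i d : L i d -> 0 < d.
Proof.
elim: i d => [d -> //|i IH d [p [a [pp [La ->]]]]].
by rewrite muln_gt0 (prime_gt0 pp) (IH _ La).
Qed.

Lemma L_logn i d : L i d -> logn 2 d <= i.
Proof.
elim: i d => [d -> //|i IH d [p [a [pp [La ->]]]]].
have a0 := L_pos La; rewrite lognM ?(prime_gt0 pp) //.
have := IH _ La; rewrite (logn_prime 2 pp); case: (2 == p) => /= h.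
  by rewrite add1n ltnS.
by rewrite add0n leqW.
Qed.

Lemma g_not_L i a : 0 < a -> L i (g a) -> a <= i.
Proof.
move=> a0 /L_logn; rewrite /g lognM ?expn_gt0 // pfactorK //.
by move=> h; apply: leq_trans h; apply: leq_addl.
Qed.

Lemma partB z : is_ultrafilter z -> (forall i, z (fun a => i < a)) ->
  [/\ is_ultrafilter (push g z), in_I (push g z), tdiv z (push g z)
    & (forall i, push g z (fun a => i < a))].
Proof.
move=> Hz Hgt.
have Hg : z (fun a => 0 < g a).
  apply: ultra_up Hz (Hgt 0) _ => a a0; by rewrite /g muln_gt0 a0 expn_gt0.
have Hu := push_ultra Hz Hg.
split => //.
- split => // i; apply: ultra_up Hz (Hgt i) _ => a ia; split.
    by rewrite /g muln_gt0 expn_gt0 /= (leq_ltn_trans _ ia).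
  move=> /(g_not_L (leq_ltn_trans (leq0n i) ia)); by rewrite leqNgt ia.
- move=> A HA; apply: ultra_up Hz (ultra_I Hz HA (Hgt 0)) _ => a [Aa a0].
  split; first by rewrite /g muln_gt0 a0 expn_gt0.
  by exists a; split => //; rewrite /g dvdn_mulr.
- move=> i; apply: ultra_up Hz (Hgt i) _ => a ia; apply: leq_trans ia _.
  by rewrite /g leq_pmulr // expn_gt0.
Qed.

Lemma star_gt n x : in_star (L n) x -> forall i, x (fun a => i < a).
Proof.
move=> [[Hx HL] Hnp]; have Hz := Hx; have [Hn He Hu Hi Hc] := Hx.
elim=> [|i IH]; first by [].
case: (Hc (fun a => i.+1 < a)) => H; first by [].
set S := fun k => (i < k) /\ (0 < k /\ ~ i.+1 < k).
have HS : x S by apply: Hi.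
have Seq : forall k, S k -> k = i.+1.
  move=> k [ik [_ nk]]; apply/eqP; rewrite eqn_leq ik andbT; by rewrite leqNgt; apply/negP.
have Hpr : principal x i.+1.
  move=> A; split.
  - move=> HA; apply: NNPP => nA; apply: He.
    apply: Hu (Hi _ _ HA HS) _ => k [Ak Sk]; apply: nA; by rewrite -(Seq k Sk).
  - move=> Ai; apply: Hu HS _ => k Sk; by rewrite (Seq k Sk).
exfalso; apply: Hnp; exists i.+1; split => //; split => //; by apply/Hpr.
Qed.

Definition S (n k : nat) : Prop := 0 < k /\ forall i, i < n -> ~ L i k.

Lemma S_in x : in_I x -> forall n, x (S n).
Proof.
move=> [Hx HI]; have [Hn He Hu Hi Hc] := Hx.
elim=> [|n IH]; first by apply: Hu Hn _ => k k0; split.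
apply: Hu (Hi _ _ IH (HI n)) _ => k [[k0 Hk] [_ nL]]; split => // i.
rewrite ltnS leq_eqVlt => /orP [/eqP -> //|]; exact: Hk.
Qed.

Lemma S_div n k : S n k -> exists d, L n d /\ d %| k.
Proof.
elim: n => [_|n IH [k0 Hk]]; first by exists 1.
have [|d [Ld dk]] := IH.
  by split => // i iL; apply: Hk; apply: ltnW.
have d0 := L_pos Ld.
set m := k %/ d.
have km : k = m * d by rewrite divnK.
have m0 : 0 < m by move: k0; rewrite km muln_gt0 => /andP [].
have m1 : 1 < m.
  rewrite ltn_neqAle m0 andbT; apply/negP => /eqP m1.
  by apply: (Hk n) => //; rewrite km -m1 mul1n.
exists (pdiv m * d); split.
  by exists (pdiv m), d; split => //; apply: pdiv_prime.
by rewrite km dvdn_mul // pdiv_dvd.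
Qed.

Lemma partA x n : in_I x -> exists y, in_closure (L n) y /\ tdiv y x.
Proof.
move=> HI; have [Hx _] := HI; have HS := S_in HI n.
set f := fun k => epsilon (inhabits 0) (fun d => L n d /\ d %| k).
have Hf : forall k, S n k -> L n (f k) /\ f k %| k.
  by move=> k Sk; apply: (epsilon_spec (inhabits 0) (fun d => L n d /\ d %| k)); apply: S_div.
have Hp : x (fun a => 0 < f a).
  by apply: ultra_up Hx HS _ => k /Hf [/L_pos]. 
exists (push f x); split; first split.
- exact: push_ultra.
- by apply: ultra_up Hx HS _ => k /Hf [].
- move=> A HA; apply: ultra_up Hx (ultra_I Hx HA HS) _ => k [Ak Sk].
  split; first by case: Sk.
  by exists (f k); split => //; case: (Hf k Sk).
Qed.

Lemma exists_free : exists z, is_ultrafilter z /\ forall i, z (fun a => i < a).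
Proof.
have [U [UU sub]] := ultraFilterLemma (@eventually_filter).
have Hgt : forall i, U (fun a => i < a).
  by move=> i; apply: sub; exists i.+1 => //.
have UF : ProperFilter U by case: UU.
exists U; split => //; split.
- exact: (Hgt 0).
- exact: (@filter_not_empty _ U UF).
- by move=> A B HA HAB; apply: filterS HA.
- by move=> A B HA HB; apply: (filterI HA HB).
- move=> A; case: (in_ultra_setVsetC A UU) => H; [by left|right].
  by apply: filterS (filterI H (Hgt 0)) => k [nA k0]; split.
Qed.

Theorem theorem3p5 :
  (* (a) *)
  (forall x, in_I x -> forall n : nat, 0 < n ->
     exists y, in_closure (L n) y /\ tdiv y x) /\
  (* (b) *)
  (forall n : nat, 0 < n -> forall x, in_star (L n) x ->
     exists y, in_I y /\ tdiv x y) /\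
  (* (c) *)
  (exists x y, in_I x /\ in_I y /\ tdiv y x).
Proof.
split; first by move=> x Hx n _; apply: partA.
split.
  move=> n _ x Hx; have [[Hu _] _] := Hx.
  have [_ HI Ht _] := partB Hu (star_gt Hx).
  by exists (push g x).
have [z [Hz Hgt]] := exists_free.
have [Hu1 HI1 _ Hgt1] := partB Hz Hgt.
have [_ HI2 Ht2 _] := partB Hu1 Hgt1.
by exists (push g (push g z)), (push g z).
Qed.
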